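(* Let $\mathcal G$ be a directed graph with no self loops, with $n$ vertices and edge set $\mathcal E=\{1,\dots,m\}$, and let $B=S-D$ be its incidence matrix. Let $g\in\mathcal E$ and $x\in\mathbb{R}^m$, and let \[ z=(I+B^\mathsf{T}DE^g)\,x. \] Then $z_g=0$. Moreover, for every edge $l\in\mathcal E$ with $\mathrm{src}(l)\neq\mathrm{dst}(g)$ and $\mathrm{dst}(l)\neq\mathrm{dst}(g)$, we have $z_l=x_l$.
   Context: $S,D\in\mathbb{R}^{n\times m}$ are defined by $S_{ie}=1$ if node $i$ is the source of edge $e$ (else $0$), and $D_{ie}=1$ if node $i$ is the destination of edge $e$ (else $0$). $\mathrm{src}(e)$ and $\mathrm{dst}(e)$ denote the source and destination of edge $e$. $E^g\in\mathbb{R}^{m\times m}$ is the matrix with all entries zero except $E^g_{gg}=1$. *)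

(* Defs.v *)
From mathcomp Require Import all_boot all_order all_algebra.
Set Implicit Arguments. Unset Strict Implicit. Unset Printing Implicit Defensive.
Import GRing.Theory Num.Theory.
Local Open Scope ring_scope.

(* A directed graph with n vertices and m edges 'I_m (edges 1..m are 0..m-1),
   given by source and destination maps. *)

Definition srcmx (R : ringType) (n m : nat) (src : 'I_m -> 'I_n) : 'M[R]_(n, m) :=
  \matrix_(i < n, e < m) (if i == src e then 1 else 0).

Definition dstmx (R : ringType) (n m : nat) (dst : 'I_m -> 'I_n) : 'M[R]_(n, m) :=
  \matrix_(i < n, e < m) (if i == dst e then 1 else 0).

Definition incmx (R : ringType) (n m : nat) (src dst : 'I_m -> 'I_n) : 'M[R]_(n, m) :=
  srcmx R src - dstmx R dst.

Definition Eg (R : ringType) (m : nat) (g : 'I_m) : 'M[R]_m := delta_mx g g.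

(* Main.v *)
Require Import Defs.
From mathcomp Require Import all_boot all_order all_algebra.
Import GRing.Theory Num.Theory.
Local Open Scope ring_scope.

Lemma zentry (R : realFieldType) (n m : nat) (src dst : 'I_m -> 'I_n)
  (g : 'I_m) (x : 'cV[R]_m) (l : 'I_m) :
  ((1%:M + (incmx R src dst)^T *m dstmx R dst *m Eg R g) *m x) l 0 =
  x l 0 + x g 0 * ((if dst g == src l then 1 else 0) - (if dst g == dst l then 1 else 0)).
Proof.
rewrite mulmxDl mul1mx mxE; congr (_ + _).
rewrite -mulmxA /Eg mxE (bigD1 g) //= big1 => [|k kg]; last first.
  rewrite [(delta_mx g g *m x) k 0]mxE big1 ?mulr0 // => j _.
  by rewrite mxE (negbTE kg) mul0r.
rewrite addr0 [(delta_mx g g *m x) g 0]mxE (bigD1 g) //= big1 => [|j jg]; last first.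
  by rewrite mxE (negbTE jg) andbF mul0r.
rewrite addr0 mxE [delta_mx g g g g]mxE !eqxx mul1r mulrC; congr (_ * _).
rewrite (bigD1 (dst g)) //= big1 => [|i ig]; last first.
  by rewrite [dstmx _ _ _ _]mxE (negbTE ig) mulr0.
by rewrite addr0 [dstmx _ _ _ _]mxE eqxx mulr1 !mxE.
Qed.

Theorem lemma3 (R : realFieldType) (n m : nat) (src dst : 'I_m -> 'I_n)
  (noloop : forall e : 'I_m, src e != dst e)
  (g : 'I_m) (x : 'cV[R]_m) :
  let B := incmx R src dst in
  let z := (1%:M + B^T *m dstmx R dst *m Eg R g) *m x in
  z g 0 = 0 /\
  (forall l : 'I_m, src l != dst g -> dst l != dst g -> z l 0 = x l 0).
Proof.
move=> B z; split.
  rewrite /z /B zentry eqxx eq_sym (negbTE (noloop g)).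
  by rewrite sub0r mulrN1 subrr.
move=> l h1 h2; rewrite /z /B zentry eq_sym (negbTE h1) eq_sym (negbTE h2).
by rewrite subr0 mulr0 addr0.
Qed.
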